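(* Let $\Gamma$ be a finite multiset of ${\sf Frm_2}$-formulas and $\Delta$ a finite multiset of ${\sf Frm}$-formulas. If $\Gamma\Rightarrow\Delta$ is derivable in ${\sf GWF_{N_2}}$, then $\Gamma\Rightarrow\bigvee\Delta$ is derivable in ${\sf GWF^s_{N_2}}$.
   Context: Language: countably many atoms $p,q,\dots$, the constant $\bot$, and binary connectives $\wedge,\vee,\rightarrow$ ($\rightarrow$ is strict implication). ${\sf Frm}$ is the set of formulas built from atoms and $\bot$ with $\wedge,\vee,\rightarrow$; $A,B,C,D$ range over ${\sf Frm}$. Let $\supset$ be a new binary symbol (material implication) and ${\sf Frm_1}={\sf Frm}\cup\{A\supset B : A,B\in{\sf Frm}\}$ (no nesting of $\supset$). ${\sf Frm_2}$ is the smallest set containing ${\sf Frm_1}$ and closed under $\wedge$ and $\vee$; $X,Y,Z$ range over ${\sf Frm_2}$. Multi-succedent sequents are $\Gamma\Rightarrow\Delta$ with $\Gamma,\Delta$ finite multisets of ${\sf Frm_2}$-formulas. The calculus ${\sf GWF_{N_2}}$ has initial sequents $(id)$ $p,\Gamma\Rightarrow\Delta,p$ ($p$ an atom) and $(L_\bot)$ $\bot,\Gamma\Rightarrow\Delta$, and rules (premises / conclusion): $(L_\wedge)$ $X,Y,\Gamma\Rightarrow\Delta$ / $X\wedge Y,\Gamma\Rightarrow\Delta$; $(R_\wedge)$ $\Gamma\Rightarrow\Delta,X$ and $\Gamma\Rightarrow\Delta,Y$ / $\Gamma\Rightarrow\Delta,X\wedge Y$; $(L_\vee)$ $X,\Gamma\Rightarrow\Delta$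 and $Y,\Gamma\Rightarrow\Delta$ / $X\vee Y,\Gamma\Rightarrow\Delta$; $(R_\vee)$ $\Gamma\Rightarrow\Delta,X,Y$ / $\Gamma\Rightarrow\Delta,X\vee Y$; $(L_\supset)$ $\Gamma\Rightarrow\Delta,A$ and $B,\Gamma\Rightarrow\Delta$ / $A\supset B,\Gamma\Rightarrow\Delta$; $(R_\supset)$ $A,\Gamma\Rightarrow\Delta,B$ / $\Gamma\Rightarrow\Delta,A\supset B$; $(LR_\rightarrow)$ $C\supset D,A\Rightarrow B$ / $\Gamma,C\rightarrow D\Rightarrow\Delta,A\rightarrow B$; $(R_\rightarrow)$ $A\Rightarrow B$ / $\Gamma\Rightarrow\Delta,A\rightarrow B$. The single-succedent calculus ${\sf GWF^s_{N_2}}$ (sequents $\Gamma\Rightarrow Z$, $Z\in{\sf Frm_2}$) has initial sequents $(id^s)$ $p,\Gamma\Rightarrow p$ and $(L^s_\bot)$ $\bot,\Gamma\Rightarrow Z$, and rules: $(L^s_\wedge)$ $X,Y,\Gamma\Rightarrow Z$ / $X\wedge Y,\Gamma\Rightarrow Z$; $(R^s_\wedge)$ $\Gamma\Rightarrow X$ and $\Gamma\Rightarrow Y$ / $\Gamma\Rightarrow X\wedge Y$; $(L^s_\vee)$ $X,\Gamma\Rightarrow Z$ and $Y,\Gamma\Rightarrow Z$ / $X\vee Y,\Gamma\Rightarrow Z$; $(R^s_{\vee_l})$ $\Gamma\Rightarrow X$ / $\Gamma\Rightarrow X\vee Y$; $(R^s_{\vee_r})$ $\Gamma\Rightarrow Y$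 / $\Gamma\Rightarrow X\vee Y$; $(L^s_\supset)$ $A\supset B,\Gamma\Rightarrow A$ and $B,\Gamma\Rightarrow Z$ / $A\supset B,\Gamma\Rightarrow Z$; $(R^s_\supset)$ $A,\Gamma\Rightarrow B$ / $\Gamma\Rightarrow A\supset B$; $(LR^s_\rightarrow)$ $C\supset D,A\Rightarrow B$ / $\Gamma,C\rightarrow D\Rightarrow A\rightarrow B$; $(R^s_\rightarrow)$ $A\Rightarrow B$ / $\Gamma\Rightarrow A\rightarrow B$. In all rules $A,B,C,D\in{\sf Frm}$, $X,Y,Z\in{\sf Frm_2}$, $\Gamma,\Delta$ arbitrary finite multisets of ${\sf Frm_2}$-formulas. $\bigvee\Delta$ is the disjunction of the members of $\Delta$ (the empty disjunction being $\bot$). *)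

(* Defs.v *)
(* Multisets are represented as lists; derivability is closed
   under permutation of the antecedent / succedent by explicit exchange rules,
   so derivability only depends on the underlying multisets. *)
From Stdlib Require Import List Permutation.
Import ListNotations.

(* Frm: atoms, bottom, /\, \/, strict implication -> *)
Inductive Frm : Type :=
| Atom : nat -> Frm
| Bot : Frm
| And : Frm -> Frm -> Frm
| Or : Frm -> Frm -> Frm
| Imp : Frm -> Frm -> Frm.

(* Frm2: smallest set containing Frm, the material implications A ⊃ B
   (A B in Frm, no nesting), closed under /\ and \/. *)
Inductive Frm2 : Type :=
| Base : Frm -> Frm2
| Mat : Frm -> Frm -> Frm2
| And2 : Frm2 -> Frm2 -> Frm2
| Or2 : Frm2 -> Frm2 -> Frm2.

(* In Frm2, a conjunction/disjunction of Frm-formulas embedded via Base is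
   identified with the embedded conjunction/disjunction. *)
Fixpoint norm2 (X : Frm2) : Frm2 :=
  match X with
  | Base A => Base A
  | Mat A B => Mat A B
  | And2 X Y =>
      match norm2 X, norm2 Y with
      | Base A, Base B => Base (And A B)
      | X', Y' => And2 X' Y'
      end
  | Or2 X Y =>
      match norm2 X, norm2 Y with
      | Base A, Base B => Base (Or A B)
      | X', Y' => Or2 X' Y'
      end
  end.

Definition andF (X Y : Frm2) : Frm2 := norm2 (And2 X Y).
Definition orF (X Y : Frm2) : Frm2 := norm2 (Or2 X Y).

Inductive GWF : list Frm2 -> list Frm2 -> Prop :=
| g_perm : forall G G' D D', Permutation G G' -> Permutation D D' ->
    GWF G D -> GWF G' D'
| g_id : forall p G D, GWF (Base (Atom p) :: G) (Base (Atom p) :: D)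
| g_Lbot : forall G D, GWF (Base Bot :: G) D
| g_Land : forall X Y G D, GWF (X :: Y :: G) D -> GWF (andF X Y :: G) D
| g_Rand : forall X Y G D, GWF G (X :: D) -> GWF G (Y :: D) ->
    GWF G (andF X Y :: D)
| g_Lor : forall X Y G D, GWF (X :: G) D -> GWF (Y :: G) D ->
    GWF (orF X Y :: G) D
| g_Ror : forall X Y G D, GWF G (X :: Y :: D) -> GWF G (orF X Y :: D)
| g_Lmat : forall A B G D, GWF G (Base A :: D) -> GWF (Base B :: G) D ->
    GWF (Mat A B :: G) D
| g_Rmat : forall A B G D, GWF (Base A :: G) (Base B :: D) ->
    GWF G (Mat A B :: D)
| g_LRimp : forall A B C E G D, GWF [Mat C E; Base A] [Base B] ->
    GWF (Base (Imp C E) :: G) (Base (Imp A B) :: D)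
| g_Rimp : forall A B G D, GWF [Base A] [Base B] ->
    GWF G (Base (Imp A B) :: D).

Inductive GWFs : list Frm2 -> Frm2 -> Prop :=
| s_perm : forall G G' Z, Permutation G G' -> GWFs G Z -> GWFs G' Z
| s_id : forall p G, GWFs (Base (Atom p) :: G) (Base (Atom p))
| s_Lbot : forall G Z, GWFs (Base Bot :: G) Z
| s_Land : forall X Y G Z, GWFs (X :: Y :: G) Z -> GWFs (andF X Y :: G) Z
| s_Rand : forall X Y G, GWFs G X -> GWFs G Y -> GWFs G (andF X Y)
| s_Lor : forall X Y G Z, GWFs (X :: G) Z -> GWFs (Y :: G) Z ->
    GWFs (orF X Y :: G) Z
| s_Rorl : forall X Y G, GWFs G X -> GWFs G (orF X Y)
| s_Rorr : forall X Y G, GWFs G Y -> GWFs G (orF X Y)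
| s_Lmat : forall A B G Z, GWFs (Mat A B :: G) (Base A) ->
    GWFs (Base B :: G) Z -> GWFs (Mat A B :: G) Z
| s_Rmat : forall A B G, GWFs (Base A :: G) (Base B) -> GWFs G (Mat A B)
| s_LRimp : forall A B C E G, GWFs [Mat C E; Base A] (Base B) ->
    GWFs (Base (Imp C E) :: G) (Base (Imp A B))
| s_Rimp : forall A B G, GWFs [Base A] (Base B) ->
    GWFs G (Base (Imp A B)).

Fixpoint bigOr (D : list Frm) : Frm :=
  match D with
  | [] => Bot
  | [A] => A
  | A :: D' => Or A (bigOr D')
  end.

(* Canonical Frm2 terms: the representation in which Frm-formulas are
   always embedded via Base (so each Frm2-formula has a unique term). *)
Definition canon2 (X : Frm2) : Prop := norm2 X = X.

(* Main.v *)
Require Import Defs.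
From Stdlib Require Import List Permutation Lia.
Import ListNotations.

Lemma Frm_eq_dec : forall A B : Frm, {A = B} + {A <> B}.
Proof. decide equality; apply PeanoNat.Nat.eq_dec. Qed.
Lemma Frm2_eq_dec : forall A B : Frm2, {A = B} + {A <> B}.
Proof. decide equality; apply Frm_eq_dec. Qed.

Ltac psolve := apply (Permutation_count_occ Frm2_eq_dec); let x := fresh "x" in intro x;
  repeat match goal with H : Permutation _ _ |- _ =>
    rewrite (Permutation_count_occ Frm2_eq_dec) in H; specialize (H x); revert H end;
  simpl; repeat rewrite ?count_occ_app; simpl;
  repeat (match goal with |- context[Frm2_eq_dec ?a ?b] => destruct (Frm2_eq_dec a b) end);
  intros; lia.

Lemma norm2_idem : forall X, norm2 (norm2 X) = norm2 X.
Proof.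
  induction X; simpl; auto;
  destruct (norm2 X1) eqn:E1; destruct (norm2 X2) eqn:E2; simpl in *;
  try rewrite IHX1; try rewrite IHX2; auto.
Qed.

Lemma andF_form : forall X Y, canon2 X -> canon2 Y ->
  andF X Y = match X, Y with Base a, Base b => Base (And a b) | _, _ => And2 X Y end.
Proof. unfold andF, canon2; intros X Y HX HY; simpl; rewrite HX, HY; destruct X, Y; reflexivity. Qed.
Lemma orF_form : forall X Y, canon2 X -> canon2 Y ->
  orF X Y = match X, Y with Base a, Base b => Base (Or a b) | _, _ => Or2 X Y end.
Proof. unfold orF, canon2; intros X Y HX HY; simpl; rewrite HX, HY; destruct X, Y; reflexivity. Qed.

Lemma andF_norm : forall X Y, andF X Y = andF (norm2 X) (norm2 Y).
Proof. intros; unfold andF; simpl; rewrite !norm2_idem; reflexivity. Qed.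
Lemma orF_norm : forall X Y, orF X Y = orF (norm2 X) (norm2 Y).
Proof. intros; unfold orF; simpl; rewrite !norm2_idem; reflexivity. Qed.
Lemma canon_norm : forall X, canon2 (norm2 X).
Proof. intros; unfold canon2; apply norm2_idem. Qed.
Lemma canon_andF : forall X Y, canon2 (andF X Y).
Proof. intros; apply canon_norm. Qed.
Lemma canon_orF : forall X Y, canon2 (orF X Y).
Proof. intros; apply canon_norm. Qed.

Ltac fforms := repeat match goal with
  | H : context[andF ?X ?Y], HX : canon2 ?X, HY : canon2 ?Y |- _ =>
      rewrite (andF_form X Y HX HY) in H
  | H : context[orF ?X ?Y], HX : canon2 ?X, HY : canon2 ?Y |- _ =>
      rewrite (orF_form X Y HX HY) in H
  end.

Lemma andF_inj : forall X Y X' Y', canon2 X -> canon2 Y -> canon2 X' -> canon2 Y' ->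
  andF X Y = andF X' Y' -> X = X' /\ Y = Y'.
Proof.
  intros X Y X' Y' HX HY HX' HY' E.
  rewrite (andF_form X Y HX HY), (andF_form X' Y' HX' HY') in E.
  destruct X, Y, X', Y'; inversion E; subst; auto.
Qed.
Lemma orF_inj : forall X Y X' Y', canon2 X -> canon2 Y -> canon2 X' -> canon2 Y' ->
  orF X Y = orF X' Y' -> X = X' /\ Y = Y'.
Proof.
  intros X Y X' Y' HX HY HX' HY' E.
  rewrite (orF_form X Y HX HY), (orF_form X' Y' HX' HY') in E.
  destruct X, Y, X', Y'; inversion E; subst; auto.
Qed.
Lemma andF_orF : forall X Y X' Y', canon2 X -> canon2 Y -> canon2 X' -> canon2 Y' ->
  andF X Y <> orF X' Y'.
Proof.
  intros X Y X' Y' HX HY HX' HY' E.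
  rewrite (andF_form X Y HX HY), (orF_form X' Y' HX' HY') in E.
  destruct X, Y, X', Y'; inversion E.
Qed.
Lemma andF_base : forall X Y A, canon2 X -> canon2 Y -> andF X Y = Base A ->
  exists a b, A = And a b.
Proof.
  intros X Y A HX HY E. rewrite (andF_form X Y HX HY) in E.
  destruct X, Y; inversion E; eauto.
Qed.
Lemma orF_base : forall X Y A, canon2 X -> canon2 Y -> orF X Y = Base A ->
  exists a b, A = Or a b.
Proof.
  intros X Y A HX HY E. rewrite (orF_form X Y HX HY) in E.
  destruct X, Y; inversion E; eauto.
Qed.
Lemma andF_mat : forall X Y A B, canon2 X -> canon2 Y -> andF X Y <> Mat A B.
Proof. intros X Y A B HX HY E. rewrite (andF_form X Y HX HY) in E. destruct X, Y; inversion E. Qed.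
Lemma orF_mat : forall X Y A B, canon2 X -> canon2 Y -> orF X Y <> Mat A B.
Proof. intros X Y A B HX HY E. rewrite (orF_form X Y HX HY) in E. destruct X, Y; inversion E. Qed.

Fixpoint fsize (A : Frm) : nat := match A with
  | Atom _ | Bot => 1
  | And a b | Or a b => S (fsize a + fsize b)
  | Imp a b => S (S (fsize a + fsize b)) end.
Fixpoint size2 (X : Frm2) : nat := match X with
  | Base A => fsize A
  | Mat a b => S (fsize a + fsize b)
  | And2 X Y | Or2 X Y => S (size2 X + size2 Y) end.

Lemma size_andF : forall X Y, canon2 X -> canon2 Y ->
  size2 X < size2 (andF X Y) /\ size2 Y < size2 (andF X Y).
Proof. intros X Y HX HY; rewrite (andF_form X Y HX HY); destruct X, Y; simpl; lia. Qed.
Lemma size_orF : forall X Y, canon2 X -> canon2 Y ->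
  size2 X < size2 (orF X Y) /\ size2 Y < size2 (orF X Y).
Proof. intros X Y HX HY; rewrite (orF_form X Y HX HY); destruct X, Y; simpl; lia. Qed.

Lemma perm_cons_cases : forall (P X : Frm2) G0 G', Permutation (P :: G0) (X :: G') ->
  (P = X /\ Permutation G0 G') \/
  (exists G1, Permutation G0 (X :: G1) /\ Permutation G' (P :: G1)).
Proof.
  intros P X G0 G' H.
  assert (Hin : In X (P :: G0)) by (eapply Permutation_in; [symmetry; exact H | left; auto]).
  destruct Hin as [E | Hin].
  - subst. left. split; auto. eapply Permutation_cons_inv; eauto.
  - right. apply in_split in Hin. destruct Hin as [l1 [l2 E]]. subst.
    exists (l1 ++ l2). split.
    + symmetry. apply Permutation_middle.
    + apply Permutation_cons_inv with X. symmetry.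
      eapply perm_trans; [|exact H]. psolve.
Qed.


Inductive C : list Frm2 -> Frm2 -> Prop :=
| c_perm : forall G G' Z, Permutation G G' -> C G Z -> C G' Z
| c_id : forall p G, C (Base (Atom p) :: G) (Base (Atom p))
| c_Lbot : forall G Z, C (Base Bot :: G) Z
| c_Land : forall X Y G Z, canon2 X -> canon2 Y -> C (X :: Y :: G) Z -> C (andF X Y :: G) Z
| c_Rand : forall X Y G, canon2 X -> canon2 Y -> C G X -> C G Y -> C G (andF X Y)
| c_Lor : forall X Y G Z, canon2 X -> canon2 Y -> C (X :: G) Z -> C (Y :: G) Z ->
    C (orF X Y :: G) Z
| c_Rorl : forall X Y G, canon2 X -> canon2 Y -> C G X -> C G (orF X Y)
| c_Rorr : forall X Y G, canon2 X -> canon2 Y -> C G Y -> C G (orF X Y)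
| c_Lmat : forall A B G Z, C (Mat A B :: G) (Base A) ->
    C (Base B :: G) Z -> C (Mat A B :: G) Z
| c_Rmat : forall A B G, C (Base A :: G) (Base B) -> C G (Mat A B)
| c_LRimp : forall A B C0 E G, C [Mat C0 E; Base A] (Base B) ->
    C (Base (Imp C0 E) :: G) (Base (Imp A B))
| c_Rimp : forall A B G, C [Base A] (Base B) -> C G (Base (Imp A B)).

Lemma C_GWFs : forall G Z, C G Z -> GWFs G Z.
Proof.
  induction 1.
  - eapply s_perm; eauto.
  - apply s_id.
  - apply s_Lbot.
  - apply s_Land; auto.
  - apply s_Rand; auto.
  - apply s_Lor; auto.
  - apply s_Rorl; auto.
  - apply s_Rorr; auto.
  - apply s_Lmat; auto.
  - apply s_Rmat; auto.
  - apply s_LRimp; auto.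
  - apply s_Rimp; auto.
Qed.

Ltac cp L := apply c_perm with L; [psolve | ].

Lemma weak : forall G Z, C G Z -> forall W, C (W :: G) Z.
Proof.
  induction 1; intro W.
  - apply c_perm with (W :: G); [psolve | auto].
  - cp (Base (Atom p) :: W :: G). apply c_id.
  - cp (Base Bot :: W :: G). apply c_Lbot.
  - cp (andF X Y :: W :: G). apply c_Land; auto. cp (W :: X :: Y :: G). auto.
  - apply c_Rand; auto.
  - cp (orF X Y :: W :: G). apply c_Lor; auto.
    cp (W :: X :: G). auto. cp (W :: Y :: G). auto.
  - apply c_Rorl; auto.
  - apply c_Rorr; auto.
  - cp (Mat A B :: W :: G). apply c_Lmat.
    cp (W :: Mat A B :: G). auto. cp (W :: Base B :: G). auto.
  - apply c_Rmat. cp (W :: Base A :: G). auto.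
  - cp (Base (Imp C0 E) :: W :: G). apply c_LRimp; auto.
  - apply c_Rimp; auto.
Qed.

Lemma weak_app : forall H G Z, C G Z -> C (H ++ G) Z.
Proof. induction H; simpl; auto using weak. Qed.

Lemma idC : forall A G, C (Base A :: G) (Base A).
Proof.
  induction A; intro G.
  - apply c_id.
  - apply c_Lbot.
  - change (Base (And A1 A2)) with (andF (Base A1) (Base A2)) at 1.
    apply c_Land; try reflexivity.
    change (Base (And A1 A2)) with (andF (Base A1) (Base A2)).
    apply c_Rand; try reflexivity. auto. cp (Base A2 :: Base A1 :: G). auto.
  - change (Base (Or A1 A2)) with (orF (Base A1) (Base A2)) at 1.
    apply c_Lor; try reflexivity;
    change (Base (Or A1 A2)) with (orF (Base A1) (Base A2)).
    apply c_Rorl; try reflexivity; auto.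
    apply c_Rorr; try reflexivity; auto.
  - apply c_LRimp. apply c_Lmat.
    + cp (Base A1 :: [Mat A1 A2]). auto.
    + auto.
Qed.

Ltac sp H := let E := fresh "E" in let Hp := fresh "Hp" in let G1 := fresh "G1" in
  let H1 := fresh "H1" in let H2 := fresh "H2" in
  destruct (perm_cons_cases _ _ _ _ H) as [[E Hp] | [G1 [H1 H2]]].

Ltac contra := match goal with
  | E : Base ?A = andF ?X ?Y, HX : canon2 ?X, HY : canon2 ?Y |- _ =>
      symmetry in E; destruct (andF_base X Y _ HX HY E) as [? [? ?]]; discriminate
  | E : Base ?A = orF ?X ?Y, HX : canon2 ?X, HY : canon2 ?Y |- _ =>
      symmetry in E; destruct (orF_base X Y _ HX HY E) as [? [? ?]]; discriminate
  | E : andF ?X ?Y = Base ?A, HX : canon2 ?X, HY : canon2 ?Y |- _ =>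
      destruct (andF_base X Y _ HX HY E) as [? [? ?]]; discriminate
  | E : orF ?X ?Y = Base ?A, HX : canon2 ?X, HY : canon2 ?Y |- _ =>
      destruct (orF_base X Y _ HX HY E) as [? [? ?]]; discriminate
  | E : Mat _ _ = andF ?X ?Y, HX : canon2 ?X, HY : canon2 ?Y |- _ =>
      symmetry in E; destruct (andF_mat _ _ _ _ HX HY E)
  | E : Mat _ _ = orF ?X ?Y, HX : canon2 ?X, HY : canon2 ?Y |- _ =>
      symmetry in E; destruct (orF_mat _ _ _ _ HX HY E)
  | E : andF ?X ?Y = Mat _ _, HX : canon2 ?X, HY : canon2 ?Y |- _ =>
      destruct (andF_mat _ _ _ _ HX HY E)
  | E : orF ?X ?Y = Mat _ _, HX : canon2 ?X, HY : canon2 ?Y |- _ =>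
      destruct (orF_mat _ _ _ _ HX HY E)
  | E : andF ?X ?Y = orF ?X' ?Y', HX : canon2 ?X, HY : canon2 ?Y,
    HX' : canon2 ?X', HY' : canon2 ?Y' |- _ => destruct (andF_orF _ _ _ _ HX HY HX' HY' E)
  | E : orF ?X' ?Y' = andF ?X ?Y, HX : canon2 ?X, HY : canon2 ?Y,
    HX' : canon2 ?X', HY' : canon2 ?Y' |- _ =>
      symmetry in E; destruct (andF_orF _ _ _ _ HX HY HX' HY' E)
  | E : Mat _ _ = Base _ |- _ => discriminate
  | E : Base _ = Mat _ _ |- _ => discriminate
  end.

Lemma invL_and : forall G2 Z, C G2 Z -> forall X Y G, canon2 X -> canon2 Y ->
  Permutation G2 (andF X Y :: G) -> C (X :: Y :: G) Z.
Proof.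
  induction 1; intros X0 Y0 G0 HX0 HY0 HP.
  - apply IHC; auto. eapply perm_trans; eauto.
  - sp HP; [contra|]. cp (Base (Atom p) :: X0 :: Y0 :: G1). apply c_id.
  - sp HP; [contra|]. cp (Base Bot :: X0 :: Y0 :: G1). apply c_Lbot.
  - sp HP.
    + destruct (andF_inj _ _ _ _ H H0 HX0 HY0 E). subst. cp (X0 :: Y0 :: G). auto.
    + cp (andF X Y :: X0 :: Y0 :: G1). apply c_Land; auto.
      cp (X0 :: Y0 :: X :: Y :: G1). apply IHC; auto. psolve.
  - apply c_Rand; auto.
  - sp HP; [contra|]. cp (orF X Y :: X0 :: Y0 :: G1). apply c_Lor; auto.
    + cp (X0 :: Y0 :: X :: G1). apply IHC1; auto. psolve.
    + cp (X0 :: Y0 :: Y :: G1). apply IHC2; auto. psolve.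
  - apply c_Rorl; auto.
  - apply c_Rorr; auto.
  - sp HP; [contra|]. cp (Mat A B :: X0 :: Y0 :: G1). apply c_Lmat.
    + cp (X0 :: Y0 :: Mat A B :: G1). apply IHC1; auto. psolve.
    + cp (X0 :: Y0 :: Base B :: G1). apply IHC2; auto. psolve.
  - apply c_Rmat. cp (X0 :: Y0 :: Base A :: G0). apply IHC; auto. psolve.
  - sp HP; [contra|]. cp (Base (Imp C0 E) :: X0 :: Y0 :: G1). apply c_LRimp; auto.
  - apply c_Rimp; auto.
Qed.

Lemma invL_or : forall G2 Z, C G2 Z -> forall X Y G, canon2 X -> canon2 Y ->
  Permutation G2 (orF X Y :: G) -> C (X :: G) Z /\ C (Y :: G) Z.
Proof.
  induction 1; intros X0 Y0 G0 HX0 HY0 HP.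
  - apply IHC; auto. eapply perm_trans; eauto.
  - sp HP; [contra|]. split; [cp (Base (Atom p) :: X0 :: G1); apply c_id | cp (Base (Atom p) :: Y0 :: G1); apply c_id].
  - sp HP; [contra|]. split; [cp (Base Bot :: X0 :: G1); apply c_Lbot | cp (Base Bot :: Y0 :: G1); apply c_Lbot].
  - sp HP; [contra|].
    destruct (IHC X0 Y0 (X :: Y :: G1)) as [I1 I2]; auto. psolve.
    split; [cp (andF X Y :: X0 :: G1); apply c_Land; auto | cp (andF X Y :: Y0 :: G1); apply c_Land; auto].
    cp (X0 :: X :: Y :: G1); auto. cp (Y0 :: X :: Y :: G1); auto.
  - destruct (IHC1 X0 Y0 G0); destruct (IHC2 X0 Y0 G0); auto. split; apply c_Rand; auto.
  - sp HP.
    + destruct (orF_inj _ _ _ _ H H0 HX0 HY0 E). subst.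
      split. cp (X0 :: G); auto. cp (Y0 :: G); auto.
    + destruct (IHC1 X0 Y0 (X :: G1)) as [I1 I2]; auto. psolve.
      destruct (IHC2 X0 Y0 (Y :: G1)) as [J1 J2]; auto. psolve.
      split; [cp (orF X Y :: X0 :: G1); apply c_Lor; auto | cp (orF X Y :: Y0 :: G1); apply c_Lor; auto].
      cp (X0 :: X :: G1); auto. cp (X0 :: Y :: G1); auto.
      cp (Y0 :: X :: G1); auto. cp (Y0 :: Y :: G1); auto.
  - destruct (IHC X0 Y0 G0); auto. split; apply c_Rorl; auto.
  - destruct (IHC X0 Y0 G0); auto. split; apply c_Rorr; auto.
  - sp HP; [contra|].
    destruct (IHC1 X0 Y0 (Mat A B :: G1)) as [I1 I2]; auto. psolve.
    destruct (IHC2 X0 Y0 (Base B :: G1)) as [J1 J2]; auto. psolve.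
    split; [cp (Mat A B :: X0 :: G1); apply c_Lmat | cp (Mat A B :: Y0 :: G1); apply c_Lmat].
    cp (X0 :: Mat A B :: G1); auto. cp (X0 :: Base B :: G1); auto.
    cp (Y0 :: Mat A B :: G1); auto. cp (Y0 :: Base B :: G1); auto.
  - destruct (IHC X0 Y0 (Base A :: G0)) as [I1 I2]; auto. psolve.
    split; apply c_Rmat. cp (X0 :: Base A :: G0); auto. cp (Y0 :: Base A :: G0); auto.
  - sp HP; [contra|]. split; [cp (Base (Imp C0 E) :: X0 :: G1); apply c_LRimp; auto | cp (Base (Imp C0 E) :: Y0 :: G1); apply c_LRimp; auto].
  - split; apply c_Rimp; auto.
Qed.

Lemma invL_mat : forall G2 Z, C G2 Z -> forall A0 B0 G,
  Permutation G2 (Mat A0 B0 :: G) -> C (Base B0 :: G) Z.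
Proof.
  induction 1; intros A0 B0 G0 HP.
  - eapply IHC; eauto. eapply perm_trans; eauto.
  - sp HP; [discriminate|]. cp (Base (Atom p) :: Base B0 :: G1). apply c_id.
  - sp HP; [discriminate|]. cp (Base Bot :: Base B0 :: G1). apply c_Lbot.
  - sp HP; [contra|]. cp (andF X Y :: Base B0 :: G1). apply c_Land; auto.
    cp (Base B0 :: X :: Y :: G1). apply IHC with A0. psolve.
  - apply c_Rand; eauto.
  - sp HP; [contra|]. cp (orF X Y :: Base B0 :: G1). apply c_Lor; auto.
    + cp (Base B0 :: X :: G1). apply IHC1 with A0. psolve.
    + cp (Base B0 :: Y :: G1). apply IHC2 with A0. psolve.
  - apply c_Rorl; eauto.
  - apply c_Rorr; eauto.
  - sp HP.
    + inversion E; subst. cp (Base B0 :: G). auto.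
    + cp (Mat A B :: Base B0 :: G1). apply c_Lmat.
      * cp (Base B0 :: Mat A B :: G1). apply IHC1 with A0. psolve.
      * cp (Base B0 :: Base B :: G1). apply IHC2 with A0. psolve.
  - apply c_Rmat. cp (Base B0 :: Base A :: G0). apply IHC with A0. psolve.
  - sp HP; [discriminate|]. cp (Base (Imp C0 E) :: Base B0 :: G1). apply c_LRimp; auto.
  - apply c_Rimp; auto.
Qed.

Lemma botE : forall G W, C G W -> W = Base Bot -> forall Z, C G Z.
Proof.
  induction 1; intros HW Z0; subst; try discriminate; try contra.
  - eapply c_perm; eauto.
  - apply c_Lbot.
  - apply c_Land; auto.
  - apply c_Lor; auto.
  - apply c_Lmat; auto.
Qed.

Lemma invR_and : forall G W, C G W -> forall X Y, canon2 X -> canon2 Y ->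
  W = andF X Y -> C G X /\ C G Y.
Proof.
  induction 1; intros X0 Y0 HX0 HY0 HW; try contra.
  - destruct (IHC X0 Y0) as [I1 I2]; auto. split; eapply c_perm; eauto.
  - split; apply c_Lbot.
  - destruct (IHC X0 Y0) as [I1 I2]; auto. split; apply c_Land; auto.
  - destruct (andF_inj _ _ _ _ H H0 HX0 HY0 HW). subst. auto.
  - destruct (IHC1 X0 Y0) as [I1 I2]; auto. destruct (IHC2 X0 Y0) as [J1 J2]; auto.
    split; apply c_Lor; auto.
  - destruct (IHC2 X0 Y0) as [I1 I2]; auto. split; apply c_Lmat; auto.
Qed.

Lemma invR_mat : forall G W, C G W -> forall A B, W = Mat A B -> C (Base A :: G) (Base B).
Proof.
  induction 1; intros A0 B0 HW; try contra; try discriminate.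
  - cp (Base A0 :: G). eauto.
  - cp (Base Bot :: Base A0 :: G). apply c_Lbot.
  - cp (andF X Y :: Base A0 :: G). apply c_Land; auto. cp (Base A0 :: X :: Y :: G). eauto.
  - cp (orF X Y :: Base A0 :: G). apply c_Lor; auto.
    cp (Base A0 :: X :: G). eauto. cp (Base A0 :: Y :: G). eauto.
  - cp (Mat A B :: Base A0 :: G). apply c_Lmat.
    cp (Base A0 :: Mat A B :: G). apply weak; auto.
    cp (Base A0 :: Base B :: G). eauto.
  - inversion HW; subst; auto.
Qed.

Definition CutFor (X : Frm2) := forall G Z, C G X -> C (X :: G) Z -> C G Z.

Lemma or_cut : forall X1 Y1, canon2 X1 -> canon2 Y1 -> CutFor X1 -> CutFor Y1 ->
  forall G W, C G W -> W = orF X1 Y1 -> forall Z, C (X1 :: G) Z -> C (Y1 :: G) Z -> C G Z.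
Proof.
  intros X1 Y1 HX1 HY1 CX CY.
  induction 1; intros HW Z0 HZ1 HZ2; try contra; try discriminate.
  - apply c_perm with G; auto. apply IHC; auto.
    cp (X1 :: G'); auto. cp (Y1 :: G'); auto.
  - apply c_Lbot.
  - apply c_Land; auto. apply IHC; auto.
    + cp (X :: Y :: X1 :: G). apply (invL_and _ _ HZ1 X Y (X1 :: G)); auto. psolve.
    + cp (X :: Y :: Y1 :: G). apply (invL_and _ _ HZ2 X Y (Y1 :: G)); auto. psolve.
  - destruct (invL_or _ _ HZ1 X Y (X1 :: G)) as [I1 I2]; auto. psolve.
    destruct (invL_or _ _ HZ2 X Y (Y1 :: G)) as [J1 J2]; auto. psolve.
    apply c_Lor; auto.
    + apply IHC1; auto. cp (X :: X1 :: G); auto. cp (X :: Y1 :: G); auto.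
    + apply IHC2; auto. cp (Y :: X1 :: G); auto. cp (Y :: Y1 :: G); auto.
  - destruct (orF_inj _ _ _ _ H H0 HX1 HY1 HW). subst. eapply CX; eauto.
  - destruct (orF_inj _ _ _ _ H H0 HX1 HY1 HW). subst. eapply CY; eauto.
  - apply c_Lmat; auto. apply IHC2; auto.
    + cp (Base B :: X1 :: G). apply (invL_mat _ _ HZ1 A B (X1 :: G)). psolve.
    + cp (Base B :: Y1 :: G). apply (invL_mat _ _ HZ2 A B (Y1 :: G)). psolve.
Qed.

Lemma imp_cut : forall A B, CutFor (Mat A B) -> forall G W, C G W -> W = Base (Imp A B) ->
  forall F H, C [Mat A B; Base F] (Base H) -> C G (Base (Imp F H)).
Proof.
  intros A0 B0 CM. induction 1; intros HW Fz Hz HH; try contra; try discriminate.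
  - eapply c_perm; eauto.
  - apply c_Lbot.
  - apply c_Land; auto.
  - apply c_Lor; auto.
  - apply c_Lmat; auto.
  - inversion HW; subst. apply c_LRimp.
    apply (CM [Mat C0 E; Base Fz]).
    + apply c_Rmat. cp (Base Fz :: [Mat C0 E; Base A0]). apply weak; auto.
    + cp (Mat C0 E :: [Mat A0 B0; Base Fz]). apply weak; auto.
  - inversion HW; subst. apply c_Rimp.
    apply (CM [Base Fz]); auto.
    apply c_Rmat. cp (Base Fz :: [Base A0]). apply weak; auto.
Qed.

Lemma size_pos : forall X, 1 <= size2 X.
Proof. destruct X; simpl; try lia. destruct f; simpl; lia. Qed.

Lemma cut_all : forall n X, size2 X <= n -> CutFor X.
Proof.
  induction n; intros Xc Hs.
  { pose proof (size_pos Xc); lia. }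
  intros G Z d1 d2.
  assert (K : forall G2 Z, C G2 Z -> forall G, Permutation G2 (Xc :: G) -> C G Xc -> C G Z).
  2:{ eapply K; eauto. }
  clear G Z d1 d2.
  induction 1; intros G0 HP d1.
  - apply IHC; auto. eapply perm_trans; eauto.
  - sp HP.
    + subst. exact d1.
    + cp (Base (Atom p) :: G1). apply c_id.
  - sp HP.
    + subst. eapply botE; eauto.
    + cp (Base Bot :: G1). apply c_Lbot.
  - sp HP.
    + subst. destruct (invR_and _ _ d1 X Y H H0 eq_refl) as [dX dY].
      destruct (size_andF X Y H H0).
      apply (IHn X ltac:(lia) G0 Z); auto.
      apply (IHn Y ltac:(lia) (X :: G0) Z). apply weak; auto.
      cp (X :: Y :: G); auto.
    + cp (andF X Y :: G1). apply c_Land; auto. apply IHC.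
      * psolve.
      * eapply invL_and; eauto.
  - apply c_Rand; auto.
  - sp HP.
    + subst. destruct (size_orF X Y H H0).
      eapply or_cut with (X1 := X) (Y1 := Y); eauto.
      * apply IHn; lia.
      * apply IHn; lia.
      * cp (X :: G); auto.
      * cp (Y :: G); auto.
    + destruct (invL_or _ _ d1 X Y G1) as [I1 I2]; auto.
      cp (orF X Y :: G1). apply c_Lor; auto.
      * apply IHC1; auto. psolve.
      * apply IHC2; auto. psolve.
  - apply c_Rorl; auto.
  - apply c_Rorr; auto.
  - sp HP.
    + subst. simpl in Hs.
      assert (dA : C G0 (Base A)) by (apply IHC1; auto; psolve).
      pose proof (invR_mat _ _ d1 A B eq_refl) as dB.
      assert (dB' : C G0 (Base B)) by (apply (IHn (Base A) ltac:(simpl; lia) G0); auto).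
      apply (IHn (Base B) ltac:(simpl; lia) G0 Z); auto.
      cp (Base B :: G); auto.
    + cp (Mat A B :: G1). apply c_Lmat.
      * apply IHC1. psolve. cp G0; auto.
      * apply IHC2. psolve. eapply invL_mat; eauto.
  - apply c_Rmat. apply IHC. psolve. apply weak; auto.
  - sp HP.
    + subst. simpl in Hs. eapply imp_cut; eauto. apply IHn. simpl; lia.
    + cp (Base (Imp C0 E) :: G1). apply c_LRimp; auto.
  - apply c_Rimp; auto.
Qed.

Lemma cut : forall X G Z, C G X -> C (X :: G) Z -> C G Z.
Proof. intros X. apply (cut_all (size2 X) X); auto. Qed.

Fixpoint fF (X : Frm2) : Frm := match X with
  | Base A => A | Mat _ _ => Bot
  | And2 X Y => And (fF X) (fF Y) | Or2 X Y => Or (fF X) (fF Y) end.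
Definition bas (X : Frm2) := exists a, norm2 X = Base a.

Lemma fF_norm : forall X a, norm2 X = Base a -> fF X = a.
Proof.
  induction X; intros a E; simpl in *; try discriminate.
  - congruence.
  - destruct (norm2 X1) eqn:E1; destruct (norm2 X2) eqn:E2; try discriminate.
    inversion E; subst. erewrite IHX1, IHX2; eauto.
  - destruct (norm2 X1) eqn:E1; destruct (norm2 X2) eqn:E2; try discriminate.
    inversion E; subst. erewrite IHX1, IHX2; eauto.
Qed.

Lemma bas_and : forall X Y, bas (andF X Y) ->
  bas X /\ bas Y /\ fF (andF X Y) = And (fF X) (fF Y).
Proof.
  intros X Y [a E]. unfold andF in E. rewrite norm2_idem in E. simpl in E.
  destruct (norm2 X) eqn:E1; destruct (norm2 Y) eqn:E2; try discriminate.
  inversion E; subst. split; [exists f; auto|]. split; [exists f0; auto|].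
  unfold andF; simpl. rewrite E1, E2. simpl. erewrite !fF_norm; eauto.
Qed.
Lemma bas_or : forall X Y, bas (orF X Y) ->
  bas X /\ bas Y /\ fF (orF X Y) = Or (fF X) (fF Y).
Proof.
  intros X Y [a E]. unfold orF in E. rewrite norm2_idem in E. simpl in E.
  destruct (norm2 X) eqn:E1; destruct (norm2 Y) eqn:E2; try discriminate.
  inversion E; subst. split; [exists f; auto|]. split; [exists f0; auto|].
  unfold orF; simpl. rewrite E1, E2. simpl. erewrite !fF_norm; eauto.
Qed.

Lemma disj_intro : forall D A G, In A D -> C G (Base A) -> C G (Base (bigOr D)).
Proof.
  induction D as [|a D IH]; intros A G Hin HA; [destruct Hin|].
  destruct D as [|b D'].
  - destruct Hin as [E|[]]; subst; auto.
  - change (Base (bigOr (a :: b :: D'))) with (orF (Base a) (Base (bigOr (b :: D')))).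
    destruct Hin as [E|Hin].
    + subst. apply c_Rorl; auto; reflexivity.
    + apply c_Rorr; try reflexivity. eapply IH; eauto.
Qed.

Lemma disj_elim : forall D G Z, (forall A, In A D -> C (Base A :: G) Z) ->
  C (Base (bigOr D) :: G) Z.
Proof.
  induction D as [|a D IH]; intros G Z H.
  - apply c_Lbot.
  - destruct D as [|b D'].
    + apply H; left; auto.
    + change (Base (bigOr (a :: b :: D'))) with (orF (Base a) (Base (bigOr (b :: D')))).
      apply c_Lor; try reflexivity.
      * apply H; left; auto.
      * apply IH. intros; apply H; right; auto.
Qed.

Lemma disj_cut : forall D G Z, C G (Base (bigOr D)) ->
  (forall A, In A D -> C (Base A :: G) Z) -> C G Z.
Proof. intros. eapply cut; eauto. apply disj_elim; auto. Qed.

Lemma T : forall G D, GWF G D -> Forall bas D -> C (map norm2 G) (Base (bigOr (map fF D))).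
Proof.
  induction 1; intros HD; cbn [map norm2].
  - assert (HD0 : Forall bas D) by (eapply Permutation_Forall; [symmetry; eauto | auto]).
    apply c_perm with (map norm2 G). apply Permutation_map; auto.
    eapply disj_cut; [apply IHGWF; auto|].
    intros A HA. eapply disj_intro; [|apply idC].
    eapply Permutation_in; [apply Permutation_map; eauto | auto].
  - eapply disj_intro; [left; reflexivity | apply c_id].
  - apply c_Lbot.
  - rewrite (canon_andF X Y), andF_norm. apply c_Land; try apply canon_norm. apply IHGWF; auto.
  - inversion HD; subst. destruct (bas_and X Y H3) as [bX [bY E]]. rewrite E.
    assert (I1 := IHGWF1 (Forall_cons _ bX H4)).
    assert (I2 := IHGWF2 (Forall_cons _ bY H4)). cbn [map fF] in I1, I2.
    eapply disj_cut; [exact I1|]. intros A [HA|HA].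
    + subst. eapply disj_cut; [apply weak; exact I2|]. intros A' [HA'|HA'].
      * subst. eapply disj_intro; [left; reflexivity|].
        change (Base (And (fF X) (fF Y))) with (andF (Base (fF X)) (Base (fF Y))).
        apply c_Rand; try reflexivity. cp (Base (fF X) :: Base (fF Y) :: map norm2 G).
        apply idC. apply idC.
      * eapply disj_intro; [right; exact HA'| apply idC].
    + eapply disj_intro; [right; exact HA| apply idC].
  - rewrite (canon_orF X Y), orF_norm. apply c_Lor; try apply canon_norm; auto.
  - inversion HD; subst. destruct (bas_or X Y H2) as [bX [bY E]]. rewrite E.
    assert (I1 := IHGWF (Forall_cons _ bX (Forall_cons _ bY H3))). cbn [map fF] in I1.
    eapply disj_cut; [exact I1|]. intros A [HA|[HA|HA]].
    + subst. eapply disj_intro; [left; reflexivity|].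
      change (Base (Or (fF X) (fF Y))) with (orF (Base (fF X)) (Base (fF Y))).
      apply c_Rorl; try reflexivity. apply idC.
    + subst. eapply disj_intro; [left; reflexivity|].
      change (Base (Or (fF X) (fF Y))) with (orF (Base (fF X)) (Base (fF Y))).
      apply c_Rorr; try reflexivity. apply idC.
    + eapply disj_intro; [right; exact HA| apply idC].
  - assert (I1 : C (map norm2 G) (Base (bigOr (map fF (Base A :: D))))).
    { apply IHGWF1. constructor; auto. exists A; reflexivity. }
    assert (I2 := IHGWF2 HD). cbn [map fF] in I1, I2.
    eapply disj_cut; [apply weak; exact I1|]. intros A' [HA|HA].
    + subst A'. cp (Mat A B :: Base A :: map norm2 G). apply c_Lmat.
      * cp (Base A :: Mat A B :: map norm2 G). apply idC.
      * cp (Base A :: Base B :: map norm2 G). apply weak; auto.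
    + eapply disj_intro; [exact HA | apply idC].
  - inversion HD; subst. match goal with Hb : bas (Mat _ _) |- _ => destruct Hb as [a E]; discriminate end.
  - assert (Hb : Forall bas [Base B]) by (constructor; [exists B; reflexivity | constructor]). assert (I := IHGWF Hb).
    cbn [map fF norm2 bigOr] in I. eapply disj_intro; [left; reflexivity|]. apply c_LRimp; auto.
  - assert (Hb : Forall bas [Base B]) by (constructor; [exists B; reflexivity | constructor]). assert (I := IHGWF Hb).
    cbn [map fF norm2 bigOr] in I. eapply disj_intro; [left; reflexivity|]. apply c_Rimp; auto.
Qed.

Theorem theorem5p6 (G : list Frm2) (D : list Frm) :
  Forall canon2 G ->
  GWF G (map Base D) -> GWFs G (Base (bigOr D)).
Proof.
  intros HG HD. apply C_GWFs.
  assert (E1 : map norm2 G = G).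
  { clear HD. induction HG; simpl; auto. rewrite H, IHHG; reflexivity. }
  assert (E2 : map fF (map Base D) = D).
  { clear HD HG E1. induction D; simpl; auto. rewrite IHD; reflexivity. }
  rewrite <- E1 at 1. rewrite <- E2 at 1. apply T; [exact HD|].
  clear. induction D; simpl; constructor; auto. exists a; reflexivity.
Qed.
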